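(* Let $k$ be an infinite field, let $A$ be a $k$-algebra, let $a_1,\ldots,a_m\in A$ and $d\ge1$. If each element of $ka_1+\cdots+ka_m$ is algebraic over $k$ of degree at most $d$, then $P_{\ge0}(a_1,\ldots,a_m)\subseteq P_{\le d-1}(a_1,\ldots,a_m)$; in particular $\dim_kP_{\ge0}(a_1,\ldots,a_m)<\infty$.
   Context: Algebras are associative with unit. For nonnegative integers $i_1,\ldots,i_m$, $p_{i_1,\ldots,i_m}(x_1,\ldots,x_m)$ is the sum of all distinct noncommutative monomials with exactly $i_j$ occurrences of $x_j$ for each $j$ ($p_{0,\ldots,0}=1$); $p_{i_1,\ldots,i_m}(a_1,\ldots,a_m)$ is its evaluation at $x_j=a_j$. $P_n(a_1,\ldots,a_m)=\operatorname{span}_k\{p_{i_1,\ldots,i_m}(a_1,\ldots,a_m)\mid i_1+\cdots+i_m=n\}$, $P_{\le r}(a_1,\ldots,a_m)=\sum_{n=0}^rP_n(a_1,\ldots,a_m)$, and $P_{\ge r}(a_1,\ldots,a_m)=\sum_{n=r}^\infty P_n(a_1,\ldots,a_m)$. Algebraic of degree at most $d$ means a root of a nonzero polynomial in $k[t]$ of degree at most $d$. *)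

(* Defs.v *)
From HB Require Import structures.
From mathcomp Require Import all_boot all_order all_algebra.
Set Implicit Arguments. Unset Strict Implicit. Unset Printing Implicit Defensive.
Import GRing.Theory.
Local Open Scope ring_scope.

Section PDefs.
Variables (k : fieldType) (A : algType k) (m : nat) (a : 'I_m -> A).

(* p_{i_1,...,i_m}(a_1,...,a_m): the sum, over all words w of length
   i_1+...+i_m in the letters 0..m-1 containing letter j exactly i_j times,
   of the product a_{w_1} * ... * a_{w_n}.  Distinct noncommutative monomials
   correspond exactly to distinct such words. *)
Definition pmono (i : 'I_m -> nat) : A :=
  \sum_(w : (\sum_(j < m) i j)%N.-tuple 'I_m | [forall j, count_mem j w == i j])
     \prod_(x <- w) a x.

Definition kspan (S : A -> Prop) (x : A) : Prop :=
  exists (n : nat) (c : 'I_n -> k) (v : 'I_n -> A),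
    (forall t, S (v t)) /\ x = \sum_(t < n) c t *: v t.

Definition Pn (n : nat) : A -> Prop :=
  kspan (fun y => exists i : 'I_m -> nat, (\sum_(j < m) i j)%N = n /\ y = pmono i).

Definition Ple (r : nat) : A -> Prop :=
  kspan (fun y => exists n, (n <= r)%N /\ Pn n y).

Definition Pge (r : nat) : A -> Prop :=
  kspan (fun y => exists n, (r <= n)%N /\ Pn n y).
End PDefs.

Definition algebraic_le (k : fieldType) (A : algType k) (d : nat) (x : A) : Prop :=
  exists q : {poly k}, q != 0 /\ (size q <= d.+1)%N /\ horner_alg x q = 0.

Definition infinite_field (k : fieldType) : Prop :=
  forall s : seq k, exists x : k, x \notin s.

(* Main.v *)
Require Import Defs.
From HB Require Import structures.
From mathcomp Require Import all_boot all_order all_algebra.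
Set Implicit Arguments. Unset Strict Implicit. Unset Printing Implicit Defensive.
Import GRing.Theory.
Local Open Scope ring_scope.

Definition subsp (k : fieldType) (A : lmodType k) (V : A -> Prop) :=
  [/\ V 0, (forall x y, V x -> V y -> V (x + y)) & (forall c x, V x -> V (c *: x))].

Lemma subsp_sum (k : fieldType) (A : lmodType k) (V : A -> Prop) (I : Type)
  (r : seq I) (P : pred I) (F : I -> A) :
  subsp V -> (forall i, P i -> V (F i)) -> V (\sum_(i <- r | P i) F i).
Proof. by case=> V0 VD _ HF; apply: big_ind. Qed.

Lemma kspan_subsp (k : fieldType) (A : algType k) (S : A -> Prop) : subsp (kspan S).
Proof.
split.
- exists 0%N, (fun _ => 0), (fun _ => 0); split; first by case.
  by rewrite big_ord0.
- move=> x y [n1 [c1 [v1 [S1 ->]]]] [n2 [c2 [v2 [S2 ->]]]].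
  exists (n1 + n2)%N.
  exists (fun t => match split t with inl u => c1 u | inr u => c2 u end).
  exists (fun t => match split t with inl u => v1 u | inr u => v2 u end).
  split; first by move=> t; case: (split t).
  rewrite big_split_ord /=; congr (_ + _); apply: eq_bigr => i _.
    by have := unsplitK (inl i : 'I_n1 + 'I_n2) => /= ->.
  by have := unsplitK (inr i : 'I_n1 + 'I_n2) => /= ->.
- move=> c x [n [c1 [v [S1 ->]]]]; exists n, (fun t => c * c1 t), v; split => //.
  by rewrite scaler_sumr; apply: eq_bigr => i _; rewrite scalerA.
Qed.

Lemma kspan_in (k : fieldType) (A : algType k) (S : A -> Prop) y : S y -> kspan S y.
Proof.
move=> Sy; exists 1%N, (fun _ => 1), (fun _ => y); split => //.
by rewrite big_ord1 scale1r.
Qed.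

Lemma kspan_min (k : fieldType) (A : algType k) (S V : A -> Prop) :
  subsp V -> (forall y, S y -> V y) -> forall x, kspan S x -> V x.
Proof.
move=> sV SV x [n [c [v [Sv ->]]]]; apply: subsp_sum => // i _.
by case: sV => _ _; apply; apply: SV.
Qed.

Lemma exists_uniq (k : fieldType) : infinite_field k ->
  forall N, exists s : seq k, uniq s /\ size s = N.
Proof.
move=> inf; elim=> [|N [s [us ss]]]; first by exists [::].
have [x xs] := inf s; exists (x :: s); by rewrite /= xs us ss.
Qed.

Lemma vand (k : fieldType) (A : lmodType k) (V : A -> Prop) : subsp V -> infinite_field k ->
  forall N (F : nat -> A), (forall z, V (\sum_(t < N) z ^+ t *: F t)) ->
  forall t, (t < N)%N -> V (F t).
Proof.
move=> sV inf N F HF t tN.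
have [s [us ss]] := exists_uniq inf N.
pose z : 'rV[k]_N := \row_i s`_i.
pose M := Vandermonde N z.
have uM : M \in unitmx.
  rewrite unitmxE unitfE det_Vandermonde; apply/prodf_neq0 => i _.
  apply/prodf_neq0 => j ij; rewrite !mxE subr_eq0.
  rewrite nth_uniq ?ss //; apply/eqP => /val_inj eij; by rewrite eij ltnn in ij.
pose t0 : 'I_N := Ordinal tN.
have := mulmxV uM => MN.
have : V (\sum_(s0 < N) invmx M s0 t0 *: \sum_(t1 < N) (z 0 s0) ^+ t1 *: F t1).
  apply: subsp_sum => // i _; case: sV => _ _; apply; exact: HF.
congr V.
under eq_bigr do rewrite scaler_sumr.
rewrite exchange_big /=.
under eq_bigr do under eq_bigr do rewrite scalerA.
under eq_bigr do rewrite -scaler_suml.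
rewrite (bigD1 t0) //= [X in _ + X]big1 ?addr0.
  have := congr1 (fun X : 'M[k]_N => X t0 t0) MN; rewrite !mxE eqxx /= => E.
  rewrite (_ : \sum_(i < N) _ = 1) ?scale1r //; apply: etrans E.
  by apply: eq_bigr => i _; rewrite !mxE mulrC.
move=> j jt.
have := congr1 (fun X : 'M[k]_N => X j t0) MN; rewrite !mxE (negbTE jt) /= => E.
rewrite (_ : \sum_(i < N) _ = 0) ?scale0r //; apply: etrans E.
by apply: eq_bigr => i _; rewrite !mxE mulrC.
Qed.

Lemma Veq T (P : T -> Prop) x y : P x -> x = y -> P y.
Proof. by move=> ? <-. Qed.

Lemma multi (k : fieldType) (A : lmodType k) (V : A -> Prop) : subsp V -> infinite_field k ->
  forall (m : nat) (W : finType) (cnt : W -> 'I_m -> nat) (B : nat) (v : W -> A),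
  (forall w j, (cnt w j <= B)%N) ->
  (forall c : 'I_m -> k, V (\sum_w (\prod_(j < m) c j ^+ cnt w j) *: v w)) ->
  forall i : 'I_m -> nat, V (\sum_(w | [forall j, cnt w j == i j]) v w).
Proof.
move=> sV inf m W cnt B v cB H.
have claim : forall r, (r <= m)%N -> forall (i : 'I_m -> nat) (c : 'I_m -> k),
  V (\sum_(w | [forall j : 'I_m, (j < r)%N ==> (cnt w j == i j)])
       (\prod_(j < m | (r <= j)%N) c j ^+ cnt w j) *: v w).
  elim=> [_ i c|r IH rm i c].
    rewrite (eq_bigl predT); last by move=> w; apply/forallP.
    exact: H.
  pose jr : 'I_m := Ordinal rm.
  pose F (t : nat) := \sum_(w | [forall j : 'I_m, (j < r)%N ==> (cnt w j == i j)]
                              && (cnt w jr == t))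
       (\prod_(j < m | (r.+1 <= j)%N) c j ^+ cnt w j) *: v w.
  have HF : forall z, V (\sum_(t < B.+1) z ^+ t *: F t).
    move=> z.
    have := IH (ltnW rm) i (fun j => if j == jr then z else c j).
    congr V.
    rewrite (partition_big (fun w => (inord (cnt w jr) : 'I_B.+1)) predT) //=.
    apply: eq_bigr => t _; rewrite /F scaler_sumr.
    apply: eq_big => w.
      congr andb; rewrite -val_eqE /= inordK // ltnS; exact: cB.
    move=> /andP[_ /eqP wt].
    rewrite scalerA; congr (_ *: _).
    rewrite (bigD1 jr) //= eqxx.
    have -> : cnt w jr = t by rewrite -wt inordK // ltnS; exact: cB.
    congr (_ * _); apply: eq_big => j.
      rewrite ltn_neqAle andbC; congr andb; rewrite eq_sym; congr negb.
    by move=> /andP[_ /negbTE ->].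
  have : V (F (i jr)).
    case: (ltnP (i jr) B.+1) => ib; first exact: vand sV inf _ F HF _ ib.
    rewrite /F big_pred0; first by case: sV.
    move=> w; apply/negbTE; rewrite negb_and; apply/orP; right.
    apply/eqP => e; move: (cB w jr); rewrite e => /leq_ltn_trans /(_ ib).
    by rewrite ltnn.
  move=> HV; apply: (Veq HV); apply: eq_bigl => w.
  apply/andP/forallP.
    move=> [/forallP Hw e] j; apply/implyP; rewrite ltnS leq_eqVlt.
    case/orP => [/eqP ej|ej]; last by have := Hw j; rewrite ej.
    by have -> : j = jr by apply: val_inj.
  move=> Hw; split; last by have := Hw jr; rewrite ltnSn.
  by apply/forallP => j; apply/implyP => jr'; have := Hw j; rewrite ltnS ltnW.
move=> i; have := claim m (leqnn m) i (fun _ => 1).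
congr V; apply: eq_big => w.
  by apply/forallP/forallP => Hw j; have := Hw j; rewrite ltn_ord.
move=> _; rewrite big_pred0 ?scale1r // => j; by rewrite leqNgt ltn_ord.
Qed.

Definition tup n m (f : {ffun 'I_n -> 'I_m}) : n.-tuple 'I_m := [tuple f t | t < n].
Definition cnt n m (f : {ffun 'I_n -> 'I_m}) (j : 'I_m) : nat := count_mem j (tup f).

Lemma cnt_le n m (f : {ffun 'I_n -> 'I_m}) j : (cnt f j <= n)%N.
Proof. by have := count_size (pred1 j) (tup f); rewrite size_tuple. Qed.

Lemma prod_count (k : comNzRingType) m (c : 'I_m -> k) (s : seq 'I_m) :
  \prod_(x <- s) c x = \prod_(j < m) c j ^+ count_mem j s.
Proof.
elim: s => [|x s IH]; first by rewrite big_nil; apply/esym/big1 => j _.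
rewrite big_cons IH /=.
under [RHS]eq_bigr do rewrite exprD.
rewrite big_split /=; congr (_ * _).
rewrite (bigD1 x) //= eqxx expr1 big1 ?mulr1 // => j /negbTE.
by rewrite eq_sym => ->.
Qed.

Lemma sum_count m (s : seq 'I_m) : (\sum_(j < m) count_mem j s)%N = size s.
Proof.
elim: s => [|x s IH]; first by rewrite big1.
rewrite /= -IH big_split /= -add1n; congr (_ + _)%N.
rewrite (bigD1 x) //= eqxx big1 ?addn0 // => j /negbTE.
by rewrite eq_sym => ->.
Qed.

Lemma sum_cnt n m (f : {ffun 'I_n -> 'I_m}) : (\sum_(j < m) cnt f j)%N = n.
Proof. by rewrite /cnt sum_count size_tuple. Qed.

Lemma prod_tup (R : Type) (idx : R) (op : Monoid.law idx) n m (f : {ffun 'I_n -> 'I_m}) (F : 'I_m -> R) :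
  \big[op/idx]_(x <- tup f) F x = \big[op/idx]_(t < n) F (f t).
Proof. by rewrite big_tuple; apply: eq_bigr => t _; rewrite tnth_mktuple. Qed.

Lemma expand (k : fieldType) (A : algType k) m (a : 'I_m -> A) (c : 'I_m -> k) n :
  (\sum_(j < m) c j *: a j) ^+ n =
  \sum_(f : {ffun 'I_n -> 'I_m}) (\prod_(j < m) c j ^+ cnt f j) *: \prod_(t < n) a (f t).
Proof.
have -> : (\sum_(j < m) c j *: a j) ^+ n = \prod_(t < n) (\sum_(j < m) c j *: a j).
  by rewrite prodr_const card_ord.
rewrite bigA_distr_bigA; apply: eq_bigr => f _.
rewrite scaler_prod; congr (_ *: _).
by rewrite /cnt -prod_count prod_tup.
Qed.

Lemma pmono_ffun (k : fieldType) (A : algType k) m (a : 'I_m -> A) (i : 'I_m -> nat) n :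
  (\sum_(j < m) i j)%N = n ->
  pmono a i = \sum_(f : {ffun 'I_n -> 'I_m} | [forall j, cnt f j == i j]) \prod_(t < n) a (f t).
Proof.
move=> E; subst n; rewrite /pmono.
rewrite (reindex (@tup _ m)) /=.
  by apply: eq_bigr => f _; rewrite prod_tup.
apply: onW_bij; exists (fun w => [ffun t => tnth w t]).
  by move=> f; apply/ffunP => t; rewrite ffunE tnth_mktuple.
by move=> w; apply: eq_from_tnth => t; rewrite tnth_mktuple ffunE.
Qed.

Lemma pmono_ext (k : fieldType) (A : algType k) m (a : 'I_m -> A) (i1 i2 : 'I_m -> nat) :
  (forall j, i1 j = i2 j) -> pmono a i1 = pmono a i2.
Proof.
move=> E.
have S : (\sum_(j < m) i2 j)%N = (\sum_(j < m) i1 j)%N by apply: eq_bigr => j _; rewrite E.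
rewrite (pmono_ffun a (erefl _)) (pmono_ffun a S).
by apply: eq_bigl => f; apply: eq_forallb => j; rewrite E.
Qed.

Lemma pow_Pn (k : fieldType) (A : algType k) m (a : 'I_m -> A) (c : 'I_m -> k) l :
  Pn a l ((\sum_(j < m) c j *: a j) ^+ l).
Proof.
have sP := kspan_subsp (fun y => exists i : 'I_m -> nat, (\sum_(j < m) i j)%N = l /\ y = pmono a i).
rewrite expand.
rewrite (partition_big (fun f => [ffun j => (inord (cnt f j) : 'I_l.+1)]) predT) //=.
apply: subsp_sum => // g _.
have E : forall f : {ffun 'I_l -> 'I_m},
    ([ffun j => (inord (cnt f j) : 'I_l.+1)] == g) = [forall j, cnt f j == g j].
  move=> f; apply/eqP/forallP.
    move=> <- j; rewrite ffunE inordK // ltnS; exact: cnt_le.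
  move=> H; apply/ffunP => j; rewrite ffunE; apply: val_inj => /=.
  by rewrite inordK ?(eqP (H j)) // ltnS; exact: cnt_le.
rewrite (eq_big (fun f => [forall j, cnt f j == g j])
  (fun f => (\prod_(j < m) c j ^+ g j) *: \prod_(t < l) a (f t))); last first.
- move=> f; rewrite /= E => /forallP H; congr (_ *: _); apply: eq_bigr => j _; by rewrite (eqP (H j)).
- by move=> f /=; rewrite E.
rewrite -scaler_sumr; case: sP => _ _; apply.
have [Hs|Hs] := eqVneq (\sum_(j < m) g j)%N l.
  rewrite -(pmono_ffun a Hs); apply: kspan_in; by exists (fun j => nat_of_ord (g j)).
rewrite big_pred0; first by case: (kspan_subsp (fun y => exists i : 'I_m -> nat, (\sum_(j < m) i j)%N = l /\ y = pmono a i)).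
move=> f; apply/negbTE/negP => /forallP H; move/eqP: Hs; apply.
apply: etrans (sum_cnt f); by apply: eq_bigr => j _; rewrite (eqP (H j)).
Qed.

Lemma pow_red (k : fieldType) (A : algType k) (d : nat) (x : A) :
  algebraic_le d x ->
  forall n, kspan (fun y => exists l, (l < d)%N /\ y = x ^+ l) (x ^+ n).
Proof.
move=> [q [q0 [sq hq]]].
have hq' : \sum_(i < size q) q`_i *: x ^+ i = 0.
  rewrite -[RHS]hq -[in RHS](coefK q) poly_def linear_sum; apply: eq_bigr => i _.
  by rewrite linearZ /= rmorphXn /= horner_algX mulr_algl.
set e := (size q).-1.
have se : size q = e.+1 by rewrite prednK // lt0n size_poly_eq0.
have le : q`_e != 0 by rewrite -lead_coefE lead_coef_eq0.
rewrite se big_ord_recr /= in hq'.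
have xe : x ^+ e = \sum_(i < e) (- (q`_e)^-1 * q`_i) *: x ^+ i.
  rewrite -[x ^+ e]scale1r -(mulVf le) -scalerA.
  move/eqP: hq'; rewrite addrC addr_eq0 => /eqP ->.
  rewrite scalerN -scaleNr scaler_sumr; apply: eq_bigr => i _.
  by rewrite scalerA mulNr.
have sV := kspan_subsp (fun y => exists l, (l < d)%N /\ y = x ^+ l).
elim/ltn_ind => n IH.
case: (ltnP n d) => nd; first by apply: kspan_in; exists n.
have en : (e <= n)%N.
  by apply: leq_trans nd; rewrite -ltnS -se.
rewrite -(subnK en) exprD xe mulr_sumr; apply: subsp_sum => // i _.
rewrite -scalerAr -exprD; case: sV => _ _; apply; apply: IH.
by rewrite -{2}(subnK en) ltn_add2l.
Qed.

Theorem corollary3p3 (k : fieldType) (A : algType k) (m : nat) (a : 'I_m -> A) (d : nat) :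
  infinite_field k -> (1 <= d)%N ->
  (forall c : 'I_m -> k, algebraic_le d (\sum_(j < m) c j *: a j)) ->
  (forall x : A, Pge a 0 x -> Ple a d.-1 x) /\
  (exists s : seq A, forall x : A, Pge a 0 x <-> kspan (fun y => y \in s) x).
Proof.
move=> inf d1 alg.
case: d d1 alg => // d _ alg.
pose V := Ple a d.
have sV : subsp V := kspan_subsp _.
have Pn_V : forall l y, (l <= d)%N -> Pn a l y -> V y.
  by move=> l y ld Py; apply: kspan_in; exists l.
have powV : forall c n, V ((\sum_(j < m) c j *: a j) ^+ n).
  move=> c n; apply: (kspan_min sV _ (pow_red (alg c) n)) => y [l [ld ->]].
  apply: (Pn_V l); last exact: pow_Pn.
  by [].
have pmV : forall i, V (pmono a i).
  move=> i; rewrite (pmono_ffun a (erefl _)).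
  apply: (multi sV inf (@cnt_le _ m)) => c.
  by rewrite -expand.
have P1 : forall x : A, Pge a 0 x -> Ple a d x.
  apply: (kspan_min sV) => y [n [_ Py]].
  by apply: (kspan_min sV _ Py) => z [i [_ ->]].
split => //.
exists (map (fun g : {ffun 'I_m -> 'I_d.+1} => pmono a (fun j => nat_of_ord (g j))) (enum {ffun 'I_m -> 'I_d.+1})).
move=> x; split.
  move=> /P1 Hx; apply: (kspan_min (kspan_subsp _) _ Hx) => y [n [nd Py]].
  apply: (kspan_min (kspan_subsp _) _ Py) => z [i [si ->]].
  apply: kspan_in; apply/mapP.
  exists [ffun j => (inord (i j) : 'I_d.+1)]; first by rewrite mem_enum.
  apply: pmono_ext => j; rewrite ffunE inordK //.
  have H : (i j <= n)%N by rewrite -si (bigD1 j) //= leq_addr.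
  by rewrite ltnS (leq_trans H nd).
move=> Hx; apply: (kspan_min (kspan_subsp _) _ Hx) => y /mapP [g _ ->].
apply: kspan_in; exists (\sum_(j < m) g j)%N; split => //.
by apply: kspan_in; exists (fun j => nat_of_ord (g j)).
Qed.
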